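(* Let $p\geq 5$ and $p'=p+2$ both be prime, and put $a=\frac{p+1}{6}$. Then for every integer $n\geq 0$ the numbers $pp'(2n+1)\pm 4a$ are positive, and $$p[p'(2n+1)+4a]+4a=p'[p(2n+1)+4a]-4\tfrac{p'-1}{6}>0,$$ $$p[p'(2n+1)-4a]-4a=p'[p(2n+1)-4a]+4\tfrac{p'-1}{6}>0.$$ All these numbers are common non-ranks of $p$ and $p'$: each of them is a non-rank and can be written both as $kp\pm 4N(p/6)$ and as $k'p'\pm 4N(p'/6)$ with $k,k'$ positive odd integers.
   Context: $N(x)$ denotes the integer nearest to the real number $x$. An odd integer $t\geq 3$ is a twin-4 rank if $3t-2$ and $3t+2$ are both prime, and a non-rank otherwise. *)

(* Defs.v *)
From mathcomp Require Import all_boot all_order all_algebra.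
Set Implicit Arguments. Unset Strict Implicit. Unset Printing Implicit Defensive.
Import Order.TTheory GRing.Theory Num.Theory.
Local Open Scope ring_scope.

(* N(x): the integer nearest to the rational x, computed as floor(x + 1/2)
   (ties, which never occur in this file's uses, are rounded up). *)
Definition nearest (x : rat) : int := Num.floor (x + 1 / 2).

Definition twin4_rank (t : int) : Prop :=
  [/\ odd (absz t), (3 <= t) & prime (absz (3 * t - 2)%R) /\ prime (absz (3 * t + 2)%R)].

Definition non_rank (t : int) : Prop :=
  [/\ odd (absz t), (3 <= t) & ~ (prime (absz (3 * t - 2)%R) /\ prime (absz (3 * t + 2)%R))].

Definition repr_for (q : nat) (t : int) : Prop :=
  exists k : nat, [/\ (0 < k)%N, odd k &
    (t = k%:Z * q%:Z + 4 * nearest (q%:Q / 6) \/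
     t = k%:Z * q%:Z - 4 * nearest (q%:Q / 6))].

Definition common_non_rank (q q' : nat) (t : int) : Prop :=
  [/\ non_rank t, repr_for q t & repr_for q' t].

(* Main.v *)
Require Import Defs.
From mathcomp Require Import all_boot all_order all_algebra.
From mathcomp Require Import zify ring lra.
Import Order.TTheory GRing.Theory Num.Theory.
Local Open Scope ring_scope.

Lemma not_prime_mul (x y : nat) : (1 < x)%N -> (1 < y)%N -> ~ prime (x * y).
Proof.
move=> hx hy hp.
have := prime_nt_dvdP (d := x) hp.
have hx1 : x != 1%N by apply/eqP; lia.
move/(_ hx1) => /(_ (dvdn_mulr y (dvdnn x))) => h.
nia.
Qed.

Lemma nearest5 (c : nat) : nearest ((6 * c + 5)%N%:Q / 6) = (c + 1)%N%:Z.
Proof.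
rewrite /nearest; apply/eqP; rewrite floor_eq.
rewrite -!pmulrn !natrD; apply/andP; split; lra.
Qed.

Lemma nearest7 (c : nat) : nearest ((6 * c + 7)%N%:Q / 6) = (c + 1)%N%:Z.
Proof.
rewrite /nearest; apply/eqP; rewrite floor_eq.
rewrite -!pmulrn !natrD; apply/andP; split; lra.
Qed.

Lemma nr_plus (c k : nat) : odd k -> (0 < k)%N ->
  non_rank ((k * (6 * c + 5) + 4 * (c + 1))%N%:Z).
Proof.
move=> ok k0; split.
- by rewrite /= oddD !oddM oddD ok /= oddM.
- rewrite lez_nat; nia.
- have -> : 3 * (k * (6 * c + 5) + 4 * (c + 1))%N%:Z - 2 = ((6 * c + 5) * (3 * k + 2))%N%:Z by lia.
  move=> [h _]; move: h; rewrite absz_nat; apply: not_prime_mul; lia.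
Qed.

Lemma nr_minus (c k : nat) : odd k -> (3 <= k)%N ->
  non_rank ((k * (6 * c + 5) - 4 * (c + 1))%N%:Z).
Proof.
move=> ok k0; split.
- rewrite /= oddB; last by nia.
  by rewrite !oddM oddD ok /= oddM.
- rewrite lez_nat; nia.
- have -> : 3 * (k * (6 * c + 5) - 4 * (c + 1))%N%:Z + 2 = ((6 * c + 5) * (3 * k - 2))%N%:Z by nia.
  move=> [_ h]; move: h; rewrite absz_nat; apply: not_prime_mul; lia.
Qed.

Lemma repr5 (c k : nat) (t : int) : odd k -> (0 < k)%N ->
  (t = k%:Z * (6 * c + 5)%N%:Z + 4 * (c + 1)%N%:Z \/
   t = k%:Z * (6 * c + 5)%N%:Z - 4 * (c + 1)%N%:Z) -> repr_for (6 * c + 5) t.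
Proof. by move=> ok k0 h; exists k; split => //; rewrite nearest5. Qed.

Lemma repr7 (c k : nat) (t : int) : odd k -> (0 < k)%N ->
  (t = k%:Z * (6 * c + 7)%N%:Z + 4 * (c + 1)%N%:Z \/
   t = k%:Z * (6 * c + 7)%N%:Z - 4 * (c + 1)%N%:Z) -> repr_for (6 * c + 5 + 2) t.
Proof. by move=> ok k0 h; exists k; split => //; rewrite -addnA nearest7. Qed.

Lemma p_form (p : nat) : (5 <= p)%N -> prime p -> prime (p + 2) ->
  exists c, p = (6 * c + 5)%N.
Proof.
move=> p5 pp pp2.
have op : odd p by case: (even_prime pp) => // h; rewrite h in p5.
have h3 : (p %% 3 = 2)%N.
  have : (p %% 3 < 3)%N by rewrite ltn_mod.
  have n0 : (p %% 3 <> 0)%N.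
    move=> /eqP; rewrite -/(dvdn 3 p) dvdn_prime2 // => /eqP; lia.
  have n1 : (p %% 3 <> 1)%N.
    move=> h; have : (3 %| p + 2)%N by rewrite /dvdn -modnDm h.
    rewrite dvdn_prime2 // => /eqP; lia.
  lia.
have h2 : (p %% 2 = 1)%N by rewrite modn2 op.
exists (p %/ 6)%N; lia.
Qed.

Theorem theorem3p8 (p : nat) :
  (5 <= p)%N -> prime p -> prime (p + 2) ->
  forall n : nat,
    let P : int := p%:Z in
    let P' : int := (p + 2)%:Z in
    let a : int := ((p + 1) %/ 6)%:Z in
    let b : int := ((p + 2 - 1) %/ 6)%:Z in
    let m : int := (2 * n + 1)%:Z in
    [/\ 0 < P * P' * m + 4 * a,
        0 < P * P' * m - 4 * a,
        P * (P' * m + 4 * a) + 4 * a = P' * (P * m + 4 * a) - 4 * b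
          /\ 0 < P * (P' * m + 4 * a) + 4 * a,
        P * (P' * m - 4 * a) - 4 * a = P' * (P * m - 4 * a) + 4 * b
          /\ 0 < P * (P' * m - 4 * a) - 4 * a &
        forall t, t \in [:: P * P' * m + 4 * a; P * P' * m - 4 * a;
                          P * (P' * m + 4 * a) + 4 * a;
                          P * (P' * m - 4 * a) - 4 * a] ->
                  common_non_rank p (p + 2) t].
Proof.
move=> p5 pp pp2 n.
have [c ->] := @p_form p p5 pp pp2.
have ha : ((6 * c + 5 + 1) %/ 6 = c + 1)%N by lia.
have hb : ((6 * c + 5 + 2 - 1) %/ 6 = c + 1)%N by lia.
move=> P P' a b m; rewrite /P /P' /a /b /m {P P' a b m} ha hb.
split.
- nia.
- nia.
- split; nia.
- split; nia.
move=> t; rewrite !inE => /or4P [] /eqP ->.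
- split.
  + have -> : ((6 * c + 5)%N%:Z * (6 * c + 5 + 2)%N%:Z * (2 * n + 1)%N%:Z + 4 * (c + 1)%N%:Z
      = (((6 * c + 7) * (2 * n + 1)) * (6 * c + 5) + 4 * (c + 1))%N%:Z) by nia.
    apply: nr_plus; last by nia.
    by rewrite !(oddD, oddM) /= ?andbF.
  + apply: (@repr5 c ((6 * c + 7) * (2 * n + 1))).
    * by rewrite !(oddD, oddM) /= ?andbF.
    * nia.
    * left; nia.
  + apply: (@repr7 c ((6 * c + 5) * (2 * n + 1))).
    * by rewrite !(oddD, oddM) /= ?andbF.
    * nia.
    * left; nia.
- split.
  + have -> : (6 * c + 5)%N%:Z * (6 * c + 5 + 2)%N%:Z * (2 * n + 1)%N%:Z - 4 * (c + 1)%N%:Z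
      = (((6 * c + 7) * (2 * n + 1)) * (6 * c + 5) - 4 * (c + 1))%N%:Z by nia.
    apply: nr_minus; last by nia.
    by rewrite !(oddD, oddM) /= ?andbF.
  + apply: (@repr5 c ((6 * c + 7) * (2 * n + 1))).
    * by rewrite !(oddD, oddM) /= ?andbF.
    * nia.
    * right; nia.
  + apply: (@repr7 c ((6 * c + 5) * (2 * n + 1))).
    * by rewrite !(oddD, oddM) /= ?andbF.
    * nia.
    * right; nia.
- split.
  + have -> : (6 * c + 5)%N%:Z * ((6 * c + 5 + 2)%N%:Z * (2 * n + 1)%N%:Z + 4 * (c + 1)%N%:Z) + 4 * (c + 1)%N%:Z
      = (((6 * c + 7) * (2 * n + 1) + 4 * (c + 1)) * (6 * c + 5) + 4 * (c + 1))%N%:Z by nia.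
    apply: nr_plus; last by nia.
    by rewrite !(oddD, oddM) /= ?andbF.
  + apply: (@repr5 c ((6 * c + 7) * (2 * n + 1) + 4 * (c + 1))).
    * by rewrite !(oddD, oddM) /= ?andbF.
    * nia.
    * left; nia.
  + apply: (@repr7 c ((6 * c + 5) * (2 * n + 1) + 4 * (c + 1))).
    * by rewrite !(oddD, oddM) /= ?andbF.
    * nia.
    * right; nia.
- split.
  + have -> : (6 * c + 5)%N%:Z * ((6 * c + 5 + 2)%N%:Z * (2 * n + 1)%N%:Z - 4 * (c + 1)%N%:Z) - 4 * (c + 1)%N%:Z
      = (((6 * c + 7) * (2 * n + 1) - 4 * (c + 1)) * (6 * c + 5) - 4 * (c + 1))%N%:Z by nia.
    apply: nr_minus; last by nia.
    rewrite oddB; last by nia.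
    by rewrite !(oddD, oddM) /= ?andbF.
  + apply: (@repr5 c ((6 * c + 7) * (2 * n + 1) - 4 * (c + 1))).
    * rewrite oddB; last by nia.
      by rewrite !(oddD, oddM) /= ?andbF.
    * nia.
    * right; nia.
  + apply: (@repr7 c ((6 * c + 5) * (2 * n + 1) - 4 * (c + 1))).
    * rewrite oddB; last by nia.
      by rewrite !(oddD, oddM) /= ?andbF.
    * nia.
    * left; nia.
Qed.
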